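(* Let $a\ge0$ and $\mathfrak g=\mathfrak r'_{3,a}$ (basis $\{e_1,e_2,e_3\}$, nonzero brackets $[e_1,e_2]=ae_2-e_3$, $[e_1,e_3]=e_2+ae_3$), and let $\langle\cdot,\cdot\rangle_0$ be the inner product for which $\{e_1,e_2,e_3\}$ is orthonormal. An inner product $\langle\cdot,\cdot\rangle$ on $\mathfrak g$ is a solvsoliton if and only if $[\langle\cdot,\cdot\rangle]=[\langle\cdot,\cdot\rangle_0]$. Moreover, $\langle\cdot,\cdot\rangle_0$ is Einstein.
   Context: An inner product on a solvable Lie algebra $\mathfrak g$ is a solvsoliton if its Ricci operator satisfies $\mathrm{Ric}=cI+D$ for some $c\in\mathbb R$ and $D\in\mathrm{Der}(\mathfrak g)$ (Ricci operator of the metric Lie algebra defined via $2\langle\nabla_XY,Z\rangle=\langle[Z,X],Y\rangle+\langle X,[Z,Y]\rangle+\langle[X,Y],Z\rangle$, $R(X,Y)=[\nabla_X,\nabla_Y]-\nabla_{[X,Y]}$, $\mathrm{Ric}(X)=\sum_iR(X,e_i)e_i$ for an orthonormal basis); it is Einstein if $\mathrm{Ric}=cI$. Two inner products are isometric up to scaling if $\langle\cdot,\cdot\rangle_1=k\langle f\cdot,f\cdot\rangle_2$ for some $k>0$ and Lie algebra automorphism $f$ of $\mathfrak g$; $[\langle\cdot,\cdot\rangle]$ denotes the equivalence class. *)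

(* Defs.v *)
From HB Require Import structures.
From mathcomp Require Import all_boot all_order all_algebra.
From mathcomp Require Import reals.
Set Implicit Arguments. Unset Strict Implicit. Unset Printing Implicit Defensive.
Import Order.TTheory GRing.Theory Num.Theory.
Local Open Scope ring_scope.

Section MetricLie.
Variable R : realType.
Notation vec := 'cV[R]_3.

(* standard basis vector e_k (k : 'I_3; e_1,e_2,e_3 of the paper are k = 0,1,2) *)
Definition ebasis (k : 'I_3) : vec := delta_mx k 0.

Definition ip (G : 'M[R]_3) (x y : vec) : R := (x^T *m G *m y) 0 0.

Definition inner_product (G : 'M[R]_3) : Prop :=
  G^T = G /\ forall x : vec, x != 0 -> 0 < ip G x x.

(* The Lie algebra r'_{3,a}:  [e1,e2] = a e2 - e3, [e1,e3] = e2 + a e3,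
   [e2,e3] = 0, extended bilinearly and skew-symmetrically. *)
Definition br_r3a (a : R) (x y : vec) : vec :=
  let p := x 0 0 * y 1 0 - x 1 0 * y 0 0 in   (* coefficient of e1 /\ e2 *)
  let q := x 0 0 * y 2 0 - x 2 0 * y 0 0 in   (* coefficient of e1 /\ e3 *)
  \col_(i < 3) [:: 0; a * p + q; - p + a * q]`_i.

Variable br : vec -> vec -> vec.

(* Levi-Civita connection via the Koszul formula:
   nabla_X Y is the unique vector with
   2<nabla_X Y, Z> = <[Z,X],Y> + <X,[Z,Y]> + <[X,Y],Z> for all Z;
   we solve it on the basis Z = e_k using the inverse Gram matrix. *)
Definition nabla (G : 'M[R]_3) (X Y : vec) : vec :=
  invmx G *m \col_(k < 3)
    ((ip G (br (ebasis k) X) Y + ip G X (br (ebasis k) Y)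
      + ip G (br X Y) (ebasis k)) / 2).

Definition curv (G : 'M[R]_3) (X Y Z : vec) : vec :=
  nabla G X (nabla G Y Z) - nabla G Y (nabla G X Z) - nabla G (br X Y) Z.

Definition orthonormal_basis (G : 'M[R]_3) (U : 'M[R]_3) : Prop :=
  U^T *m G *m U = 1%:M.

Definition ricci_wrt (G U : 'M[R]_3) (X : vec) : vec :=
  \sum_(i < 3) curv G X (col i U) (col i U).

Definition derivation (D : 'M[R]_3) : Prop :=
  forall x y : vec, D *m br x y = br (D *m x) y + br x (D *m y).

Definition automorphism (f : 'M[R]_3) : Prop :=
  f \in unitmx /\ forall x y : vec, f *m br x y = br (f *m x) (f *m y).

(* Ric = c I + D with D a derivation (the Ricci operator being computed in any
   orthonormal basis; it does not depend on the choice). *)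
Definition solvsoliton (G : 'M[R]_3) : Prop :=
  exists (c : R) (D : 'M[R]_3), derivation D /\
    forall U, orthonormal_basis G U ->
      forall X : vec, ricci_wrt G U X = c *: X + D *m X.

Definition einstein (G : 'M[R]_3) : Prop :=
  exists c : R, forall U, orthonormal_basis G U ->
      forall X : vec, ricci_wrt G U X = c *: X.

Definition iso_up_to_scaling (G1 G2 : 'M[R]_3) : Prop :=
  exists (k : R) (f : 'M[R]_3), 0 < k /\ automorphism f /\
    forall x y : vec, ip G1 x y = k * ip G2 (f *m x) (f *m y).

End MetricLie.

(* Main.v *)
Require Import Defs.
From HB Require Import structures.
From mathcomp Require Import all_boot all_order all_algebra.
From mathcomp Require Import reals.
From mathcomp Require Import ring lra.
Import Order.TTheory GRing.Theory Num.Theory.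
Local Open Scope ring_scope.
Set Implicit Arguments. Unset Strict Implicit. Unset Printing Implicit Defensive.

Section S.
Variable R : realType.
Variable a : R.
Notation vec := 'cV[R]_3.
Notation B := (br_r3a a).
Notation e := (ebasis R).
Ltac ord3 i := let H := fresh in case: i => [[|[|[|?]]] H] //.
Definition v3 (x y z : R) : vec := \col_(i<3) [:: x; y; z]`_i.
Lemma v3_0 x y z : v3 x y z 0 0 = x. Proof. by rewrite mxE. Qed.
Lemma v3_1 x y z : v3 x y z 1 0 = y. Proof. by rewrite mxE. Qed.
Lemma v3_2 x y z : v3 x y z 2 0 = z. Proof. by rewrite mxE. Qed.
Lemma v3E (X : vec) : X = v3 (X 0 0) (X 1 0) (X 2 0).
Proof. apply/matrixP => i j; rewrite (ord1 j) mxE; ord3 i; by congr (X _ _); apply/val_inj. Qed.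
Lemma v3_eq x y z x' y' z' : x = x' -> y = y' -> z = z' -> v3 x y z = v3 x' y' z'.
Proof. by move=> -> -> ->. Qed.
Lemma v3D x y z x' y' z' : v3 x y z + v3 x' y' z' = v3 (x + x') (y + y') (z + z').
Proof. apply/matrixP => i j; rewrite !mxE; by ord3 i. Qed.
Lemma v3B x y z x' y' z' : v3 x y z - v3 x' y' z' = v3 (x - x') (y - y') (z - z').
Proof. apply/matrixP => i j; rewrite !mxE; by ord3 i. Qed.
Lemma v3Z k x y z : k *: v3 x y z = v3 (k * x) (k * y) (k * z).
Proof. apply/matrixP => i j; rewrite !mxE; by ord3 i. Qed.
Lemma v30 : 0 = v3 0 0 0 :> vec.
Proof. apply/matrixP => i j; rewrite !mxE; by ord3 i. Qed.
Lemma eE0 : e 0 = v3 1 0 0. Proof. apply/matrixP => i j; rewrite (ord1 j) !mxE; by ord3 i. Qed.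
Lemma eE1 : e 1 = v3 0 1 0. Proof. apply/matrixP => i j; rewrite (ord1 j) !mxE; by ord3 i. Qed.
Lemma eE2 : e 2 = v3 0 0 1. Proof. apply/matrixP => i j; rewrite (ord1 j) !mxE; by ord3 i. Qed.
Lemma brE (X Y : vec) : B X Y = v3 0 (a * (X 0 0 * Y 1 0 - X 1 0 * Y 0 0) + (X 0 0 * Y 2 0 - X 2 0 * Y 0 0))
   (- (X 0 0 * Y 1 0 - X 1 0 * Y 0 0) + a * (X 0 0 * Y 2 0 - X 2 0 * Y 0 0)).
Proof. by []. Qed.
Definition mk3 (a00 a01 a02 a10 a11 a12 a20 a21 a22 : R) : 'M[R]_3 :=
  \matrix_(i<3, j<3) nth 0 (nth [::] [:: [:: a00;a01;a02]; [:: a10;a11;a12]; [:: a20;a21;a22]] i) j.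
Definition G1 p q r := mk3 1 0 0 0 p r 0 r q.
Definition dinv (p q r : R) := (p*q - r^+2)^-1.
Definition Hm p q r := let di := dinv p q r in mk3 1 0 0 0 (q*di) (-(r*di)) 0 (-(r*di)) (p*di).
Lemma invmx_eq (A C : 'M[R]_3) : A *m C = 1%:M -> invmx A = C.
Proof.
move=> h; have [uA _] := mulmx1_unit h.
by rewrite -[RHS]mul1mx -(mulVmx uA) -mulmxA h mulmx1.
Qed.
Lemma invG1 p q r : p*q - r^+2 != 0 -> invmx (G1 p q r) = Hm p q r.
Proof.
move=> hd; apply: invmx_eq; apply/matrixP => i j.
rewrite /G1 /Hm /dinv !mxE !big_ord_recr big_ord0 /= !mxE /=.
ord3 i; ord3 j; rewrite /= ?mxE /=; field; done.
Qed.
Lemma mulmx3 m n (A : 'M[R]_(m,3)) (v : 'M[R]_(3,n)) i j : (A *m v) i j = A i 0 * v 0 j + A i 1 * v 1 j + A i 2 * v 2 j.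
Proof. rewrite mxE !big_ord_recr big_ord0 /= add0r.
by congr (A i _ * v _ j + A i _ * v _ j + A i _ * v _ j); apply/val_inj.
Qed.
Lemma ip_expand (G : 'M[R]_3) (x y : vec) : ip G x y =
  x 0 0 * (G 0 0 * y 0 0 + G 0 1 * y 1 0 + G 0 2 * y 2 0) +
  x 1 0 * (G 1 0 * y 0 0 + G 1 1 * y 1 0 + G 1 2 * y 2 0) +
  x 2 0 * (G 2 0 * y 0 0 + G 2 1 * y 1 0 + G 2 2 * y 2 0).
Proof. rewrite /ip !mulmx3 !mxE; ring. Qed.
Definition Ric (G : 'M[R]_3) (X : vec) : vec :=
  \sum_(j<3) \sum_(k<3) (invmx G j k) *: curv B G X (e j) (e k).
Lemma sum3 (V : zmodType) (F : 'I_3 -> V) : \sum_(j<3) F j = F 0 + F 1 + F 2.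
Proof.
rewrite !big_ord_recr big_ord0 /= add0r.
by congr (F _ + F _ + F _); apply/val_inj.
Qed.
Lemma sum33 (V : zmodType) (F : 'I_3 -> 'I_3 -> V) : \sum_(j<3) \sum_(k<3) F j k =
  F 0 0 + F 0 1 + F 0 2 + (F 1 0 + F 1 1 + F 1 2) + (F 2 0 + F 2 1 + F 2 2).
Proof. rewrite sum3 !sum3 //. Qed.
Lemma Ric_expand G X : Ric G X =
  invmx G 0 0 *: curv B G X (e 0) (e 0) + invmx G 0 1 *: curv B G X (e 0) (e 1) + invmx G 0 2 *: curv B G X (e 0) (e 2) +
  (invmx G 1 0 *: curv B G X (e 1) (e 0) + invmx G 1 1 *: curv B G X (e 1) (e 1) + invmx G 1 2 *: curv B G X (e 1) (e 2)) +
  (invmx G 2 0 *: curv B G X (e 2) (e 0) + invmx G 2 1 *: curv B G X (e 2) (e 1) + invmx G 2 2 *: curv B G X (e 2) (e 2)).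
Proof. rewrite /Ric. rewrite (@sum33 _ (fun j k => invmx G j k *: curv B G X (e j) (e k))). done. Qed.
Lemma Hm_entries p q r : let H := Hm p q r in
  (H 0 0 = 1 /\ H 0 1 = 0 /\ H 0 2 = 0 /\ H 1 0 = 0 /\ H 2 0 = 0) /\
      (H 1 1 = q * dinv p q r /\ H 1 2 = - (r * dinv p q r) /\ H 2 1 = - (r * dinv p q r) /\ H 2 2 = p * dinv p q r).
Proof. by rewrite /= /Hm /mk3 !mxE. Qed.
Lemma nablaG1 (p q r : R) (X Y : vec) : p*q - r^+2 != 0 ->
  nabla B (G1 p q r) X Y = v3 ((X 1 0) * (Y 1 0) * a * p - (X 1 0) * (Y 1 0) * r + (X 1 0) * (Y 2 0) * a * r + (2%:R)^-1 * (X 1 0) * (Y 2 0) * p - (2%:R)^-1 * (X 1 0) * (Y 2 0) * q + (X 2 0) * (Y 1 0) * a * r + (2%:R)^-1 * (X 2 0) * (Y 1 0) * p - (2%:R)^-1 * (X 2 0) * (Y 1 0) * q + (X 2 0) * (Y 2 0) * a * q + (X 2 0) * (Y 2 0) * r)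
 ((2%:R)^-1 * (X 0 0) * (Y 1 0) * (dinv p q r) * p * r + (2%:R)^-1 * (X 0 0) * (Y 1 0) * (dinv p q r) * q * r + (2%:R)^-1 * (X 0 0) * (Y 2 0) * (dinv p q r) * p * q + (2%:R)^-1 * (X 0 0) * (Y 2 0) * (dinv p q r) * q * q - (X 1 0) * (Y 0 0) * a * (dinv p q r) * p * q + (X 1 0) * (Y 0 0) * a * (dinv p q r) * r * r + (2%:R)^-1 * (X 1 0) * (Y 0 0) * (dinv p q r) * p * r + (2%:R)^-1 * (X 1 0) * (Y 0 0) * (dinv p q r) * q * r - (2%:R)^-1 * (X 2 0) * (Y 0 0) * (dinv p q r) * p * q + (2%:R)^-1 * (X 2 0) * (Y 0 0) * (dinv p q r) * q * q + (X 2 0) * (Y 0 0) * (dinv p q r) * r * r)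
 (- (2%:R)^-1 * (X 0 0) * (Y 1 0) * (dinv p q r) * p * q - (2%:R)^-1 * (X 0 0) * (Y 1 0) * (dinv p q r) * p * p - (2%:R)^-1 * (X 0 0) * (Y 2 0) * (dinv p q r) * p * r - (2%:R)^-1 * (X 0 0) * (Y 2 0) * (dinv p q r) * q * r + (2%:R)^-1 * (X 1 0) * (Y 0 0) * (dinv p q r) * p * q - (2%:R)^-1 * (X 1 0) * (Y 0 0) * (dinv p q r) * p * p - (X 1 0) * (Y 0 0) * (dinv p q r) * r * r - (X 2 0) * (Y 0 0) * a * (dinv p q r) * p * q + (X 2 0) * (Y 0 0) * a * (dinv p q r) * r * r - (2%:R)^-1 * (X 2 0) * (Y 0 0) * (dinv p q r) * p * r - (2%:R)^-1 * (X 2 0) * (Y 0 0) * (dinv p q r) * q * r).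
Proof.
move=> hd; rewrite /nabla invG1 //; apply/matrixP => i j; rewrite (ord1 j).
rewrite mulmx3 !mxE !ip_expand /Hm /G1 /br_r3a /ebasis.
ord3 i; rewrite !mxE /=; field; done.
Qed.
End S.

Section S2.
Variable R : realType.
Variable a : R.
Notation vec := 'cV[R]_3.
Notation B := (br_r3a a).
Notation e := (ebasis R).
Ltac gam_tac hd := rewrite (@nablaG1 _ a _ _ _ _ _ hd) ?v3_0 ?v3_1 ?v3_2; apply: v3_eq; field; try done.
Lemma RicG1_expand (p q r : R) (X : vec) (hd : p*q - r^+2 != 0) : Ric a (G1 p q r) X =
  curv B (G1 p q r) X (e 0) (e 0) + (q * dinv p q r) *: curv B (G1 p q r) X (e 1) (e 1)
  + (- (r * dinv p q r)) *: curv B (G1 p q r) X (e 1) (e 2)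
  + (- (r * dinv p q r)) *: curv B (G1 p q r) X (e 2) (e 1) + (p * dinv p q r) *: curv B (G1 p q r) X (e 2) (e 2).
Proof.
have [[h00 [h01 [h02 [h10 h20]]]] [h11 [h12 [h21 h22]]]] := Hm_entries p q r.
rewrite Ric_expand (invG1 hd); move: (curv B (G1 p q r) X) => C;
rewrite h00 h01 h02 h10 h20 h11 h12 h21 h22 !scale0r !addr0 !add0r scale1r.
by rewrite !addrA.
Qed.
Lemma Gam00 (p q r : R) (hd : p*q - r^+2 != 0) :
  nabla B (G1 p q r) (v3 1 0 0) (v3 1 0 0) = v3 0 0 0.
Proof. gam_tac hd. Qed.

Lemma Gam01 (p q r : R) (hd : p*q - r^+2 != 0) :
  nabla B (G1 p q r) (v3 1 0 0) (v3 0 1 0) = v3 0 ((2%:R)^-1 * (dinv p q r) * p * r + (2%:R)^-1 * (dinv p q r) * q * r) (- (2%:R)^-1 * (dinv p q r) * p * q - (2%:R)^-1 * (dinv p q r) * p * p).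
Proof. gam_tac hd. Qed.

Lemma Gam02 (p q r : R) (hd : p*q - r^+2 != 0) :
  nabla B (G1 p q r) (v3 1 0 0) (v3 0 0 1) = v3 0 ((2%:R)^-1 * (dinv p q r) * p * q + (2%:R)^-1 * (dinv p q r) * q * q) (- (2%:R)^-1 * (dinv p q r) * p * r - (2%:R)^-1 * (dinv p q r) * q * r).
Proof. gam_tac hd. Qed.

Lemma Gam10 (p q r : R) (hd : p*q - r^+2 != 0) :
  nabla B (G1 p q r) (v3 0 1 0) (v3 1 0 0) = v3 0 (- a * (dinv p q r) * p * q + a * (dinv p q r) * r * r + (2%:R)^-1 * (dinv p q r) * p * r + (2%:R)^-1 * (dinv p q r) * q * r) ((2%:R)^-1 * (dinv p q r) * p * q - (2%:R)^-1 * (dinv p q r) * p * p - (dinv p q r) * r * r).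
Proof. gam_tac hd. Qed.

Lemma Gam11 (p q r : R) (hd : p*q - r^+2 != 0) :
  nabla B (G1 p q r) (v3 0 1 0) (v3 0 1 0) = v3 (a * p - r) 0 0.
Proof. gam_tac hd. Qed.

Lemma Gam12 (p q r : R) (hd : p*q - r^+2 != 0) :
  nabla B (G1 p q r) (v3 0 1 0) (v3 0 0 1) = v3 (a * r + (2%:R)^-1 * p - (2%:R)^-1 * q) 0 0.
Proof. gam_tac hd. Qed.

Lemma Gam20 (p q r : R) (hd : p*q - r^+2 != 0) :
  nabla B (G1 p q r) (v3 0 0 1) (v3 1 0 0) = v3 0 (- (2%:R)^-1 * (dinv p q r) * p * q + (2%:R)^-1 * (dinv p q r) * q * q + (dinv p q r) * r * r) (- a * (dinv p q r) * p * q + a * (dinv p q r) * r * r - (2%:R)^-1 * (dinv p q r) * p * r - (2%:R)^-1 * (dinv p q r) * q * r).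
Proof. gam_tac hd. Qed.

Lemma Gam21 (p q r : R) (hd : p*q - r^+2 != 0) :
  nabla B (G1 p q r) (v3 0 0 1) (v3 0 1 0) = v3 (a * r + (2%:R)^-1 * p - (2%:R)^-1 * q) 0 0.
Proof. gam_tac hd. Qed.

Lemma Gam22 (p q r : R) (hd : p*q - r^+2 != 0) :
  nabla B (G1 p q r) (v3 0 0 1) (v3 0 0 1) = v3 (a * q + r) 0 0.
Proof. gam_tac hd. Qed.

Ltac ric_tac hd :=
  rewrite (RicG1_expand _ hd);
  rewrite /curv eE0 eE1 eE2;
  rewrite ?(Gam00 hd) ?(Gam01 hd) ?(Gam02 hd) ?(Gam10 hd) ?(Gam11 hd) ?(Gam12 hd) ?(Gam20 hd) ?(Gam21 hd) ?(Gam22 hd);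
  rewrite !(@nablaG1 _ a _ _ _ _ _ hd) ?brE ?v3_0 ?v3_1 ?v3_2 ?v3B ?v3Z ?v3D;
  apply: v3_eq; field; try done.
Lemma RicE0 (p q r : R) (hd : p*q - r^+2 != 0) :
  Ric a (G1 p q r) (v3 1 0 0) = v3 (- 2%:R * a * a * (dinv p q r) * p * q + 2%:R * a * a * (dinv p q r) * r * r + (dinv p q r) * p * q - (2%:R)^-1 * (dinv p q r) * p * p - (2%:R)^-1 * (dinv p q r) * q * q - 2%:R * (dinv p q r) * r * r) 0 0.
Proof. ric_tac hd. Qed.

Lemma RicE1 (p q r : R) (hd : p*q - r^+2 != 0) :
  Ric a (G1 p q r) (v3 0 1 0) = v3 0 ((2%:R)^-1 * a * (dinv p q r) * p * r + (2%:R)^-1 * a * (dinv p q r) * q * r + (2%:R)^-1 * a * (dinv p q r) * (dinv p q r) * p * q * q * r - (2%:R)^-1 * a * (dinv p q r) * (dinv p q r) * p * r * r * r + (2%:R)^-1 * a * (dinv p q r) * (dinv p q r) * p * p * q * r - (2%:R)^-1 * a * (dinv p q r) * (dinv p q r) * q * r * r * r - a * a * (dinv p q r) * p * q + a * a * (dinv p q r) * r * r + 2%:R * a * a * (dinv p q r) * (dinv p q r) * p * q * r * r - a * a * (dinv p q r) * (dinv p q r) * p * p * q * q - a * a * (dinv p q r) * (dinv p q r) * r * r * r * r + (2%:R)^-1 * (dinv p q r) * p * q - (2%:R)^-1 * (dinv p q r) * q * q - (dinv p q r) * r * r + 3%:R * (2%:R)^-1 * (dinv p q r) * (dinv p q r)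 * p * q * r * r - (2%:R)^-1 * (dinv p q r) * (dinv p q r) * p * p * q * q - (2%:R)^-1 * (dinv p q r) * (dinv p q r) * p * p * r * r + (2%:R)^-1 * (dinv p q r) * (dinv p q r) * p * p * p * q - (dinv p q r) * (dinv p q r) * r * r * r * r) (3%:R * (2%:R)^-1 * a * (dinv p q r) * p * q - (2%:R)^-1 * a * (dinv p q r) * p * p - 2%:R * a * (dinv p q r) * r * r + (2%:R)^-1 * a * (dinv p q r) * (dinv p q r) * p * q * r * r - (2%:R)^-1 * a * (dinv p q r) * (dinv p q r) * p * p * q * q + (2%:R)^-1 * a * (dinv p q r) * (dinv p q r) * p * p * r * r - (2%:R)^-1 * a * (dinv p q r) * (dinv p q r) * p * p * p * q + (2%:R)^-1 * (dinv p q r) * p * r + (2%:R)^-1 * (dinv p q r) * q * r + (2%:R)^-1 * (dinv p q r) * (dinv p q r) * p * q * q * r - (2%:R)^-1 * (dinv p q r) * (dinv p q r) * p * r * r * r + (2%:R)^-1 * (dinv p q r) * (dinv p q r) * p * p * q * r - (2%:R)^-1 * (dinv p q r) * (dinv p q r) * q * r * r * r).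
Proof. ric_tac hd. Qed.

Lemma RicE2 (p q r : R) (hd : p*q - r^+2 != 0) :
  Ric a (G1 p q r) (v3 0 0 1) = v3 0 (- 3%:R * (2%:R)^-1 * a * (dinv p q r) * p * q + (2%:R)^-1 * a * (dinv p q r) * q * q + 2%:R * a * (dinv p q r) * r * r - (2%:R)^-1 * a * (dinv p q r) * (dinv p q r) * p * q * r * r + (2%:R)^-1 * a * (dinv p q r) * (dinv p q r) * p * q * q * q + (2%:R)^-1 * a * (dinv p q r) * (dinv p q r) * p * p * q * q - (2%:R)^-1 * a * (dinv p q r) * (dinv p q r) * q * q * r * r + (2%:R)^-1 * (dinv p q r) * p * r + (2%:R)^-1 * (dinv p q r) * q * r + (2%:R)^-1 * (dinv p q r) * (dinv p q r) * p * q * q * r - (2%:R)^-1 * (dinv p q r) * (dinv p q r) * p * r * r * r + (2%:R)^-1 * (dinv p q r) * (dinv p q r) * p * p * q * r - (2%:R)^-1 * (dinv p q r) * (dinv p q r) * q * r * r * r) (- (2%:R)^-1 * a * (dinv p q r) * p * r - (2%:R)^-1 * a * (dinv p q r) * q * r - (2%:R)^-1 * a * (dinv p q r) * (dinv p q r) * p * q * q * r + (2%:R)^-1 * a * (dinv p q r) * (dinv p q r) * p * r * r * r - (2%:R)^-1 * a * (dinv p q r) * (dinv p q r) * p * p * q * r + (2%:R)^-1 * a * (dinv p q r) * (dinv p q r) * q * r * r * r - a * a * (dinv p q r) * p * q + a * a * (dinv p q r) * r * r + 2%:R * a * a * (dinv p q r) * (dinv p q r) * p * q * r * r - a * a * (dinv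 p q r) * (dinv p q r) * p * p * q * q - a * a * (dinv p q r) * (dinv p q r) * r * r * r * r + (2%:R)^-1 * (dinv p q r) * p * q - (2%:R)^-1 * (dinv p q r) * p * p - (dinv p q r) * r * r + 3%:R * (2%:R)^-1 * (dinv p q r) * (dinv p q r) * p * q * r * r + (2%:R)^-1 * (dinv p q r) * (dinv p q r) * p * q * q * q - (2%:R)^-1 * (dinv p q r) * (dinv p q r) * p * p * q * q - (2%:R)^-1 * (dinv p q r) * (dinv p q r) * q * q * r * r - (dinv p q r) * (dinv p q r) * r * r * r * r).
Proof. ric_tac hd. Qed.
End S2.

Section S3.
Variable R : realType.
Variable a : R.
Notation vec := 'cV[R]_3.
Notation B := (br_r3a a).
Notation e := (ebasis R).
Implicit Types (G : 'M[R]_3) (x y z X Y Z : vec) (c : R).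

Lemma brDl x y z : B (x + y) z = B x z + B y z.
Proof. rewrite !brE v3D; apply: v3_eq; rewrite ?mxE; ring. Qed.
Lemma brZl c x z : B (c *: x) z = c *: B x z.
Proof. rewrite !brE v3Z; apply: v3_eq; rewrite ?mxE; ring. Qed.
Lemma brDr x y z : B z (x + y) = B z x + B z y.
Proof. rewrite !brE v3D; apply: v3_eq; rewrite ?mxE; ring. Qed.
Lemma brZr c x z : B z (c *: x) = c *: B z x.
Proof. rewrite !brE v3Z; apply: v3_eq; rewrite ?mxE; ring. Qed.

Lemma ipDl G x y z : ip G (x + y) z = ip G x z + ip G y z.
Proof. rewrite !ip_expand !mxE; ring. Qed.
Lemma ipZl G c x z : ip G (c *: x) z = c * ip G x z.
Proof. rewrite !ip_expand !mxE; ring. Qed.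
Lemma ipDr G x y z : ip G z (x + y) = ip G z x + ip G z y.
Proof. rewrite !ip_expand !mxE; ring. Qed.
Lemma ipZr G c x z : ip G z (c *: x) = c * ip G z x.
Proof. rewrite !ip_expand !mxE; ring. Qed.

Definition K G X Y Z : R := (ip G (B Z X) Y + ip G X (B Z Y) + ip G (B X Y) Z) / 2.
Lemma nablaK G X Y : nabla B G X Y = invmx G *m \col_(k < 3) K G X Y (e k).
Proof. by []. Qed.

Lemma KDl G (X1 X2 : vec) Y Z : K G (X1 + X2) Y Z = K G X1 Y Z + K G X2 Y Z.
Proof. rewrite /K ?brZl ?brZr ?brDl ?brDr ?ipZl ?ipZr ?ipDl ?ipDr; field; done. Qed.
Lemma KZl G c X Y Z : K G (c *: X) Y Z = c * K G X Y Z.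
Proof. rewrite /K ?brZl ?brZr ?brDl ?brDr ?ipZl ?ipZr ?ipDl ?ipDr; field; done. Qed.
Lemma KDr G X (Y1 Y2 : vec) Z : K G X (Y1 + Y2) Z = K G X Y1 Z + K G X Y2 Z.
Proof. rewrite /K ?brZl ?brZr ?brDl ?brDr ?ipZl ?ipZr ?ipDl ?ipDr; field; done. Qed.
Lemma KZr G c X Y Z : K G X (c *: Y) Z = c * K G X Y Z.
Proof. rewrite /K ?brZl ?brZr ?brDl ?brDr ?ipZl ?ipZr ?ipDl ?ipDr; field; done. Qed.
Lemma KDz G X Y (Z1 Z2 : vec) : K G X Y (Z1 + Z2) = K G X Y Z1 + K G X Y Z2.
Proof. rewrite /K ?brZl ?brZr ?brDl ?brDr ?ipZl ?ipZr ?ipDl ?ipDr; field; done. Qed.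
Lemma KZz G c X Y Z : K G X Y (c *: Z) = c * K G X Y Z.
Proof. rewrite /K ?brZl ?brZr ?brDl ?brDr ?ipZl ?ipZr ?ipDl ?ipDr; field; done. Qed.

Lemma nablaDl G (X1 X2 : vec) Y : nabla B G (X1 + X2) Y = nabla B G X1 Y + nabla B G X2 Y.
Proof.
rewrite !nablaK -mulmxDr; congr (_ *m _); apply/matrixP => k j.
by rewrite !mxE KDl.
Qed.
Lemma nablaZl G c X Y : nabla B G (c *: X) Y = c *: nabla B G X Y.
Proof.
rewrite !nablaK scalemxAr; congr (_ *m _); apply/matrixP => k j.
by rewrite !mxE KZl.
Qed.
Lemma nablaDr G X (Y1 Y2 : vec) : nabla B G X (Y1 + Y2) = nabla B G X Y1 + nabla B G X Y2.
Proof.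
rewrite !nablaK -mulmxDr; congr (_ *m _); apply/matrixP => k j.
by rewrite !mxE KDr.
Qed.
Lemma nablaZr G c X Y : nabla B G X (c *: Y) = c *: nabla B G X Y.
Proof.
rewrite !nablaK scalemxAr; congr (_ *m _); apply/matrixP => k j.
by rewrite !mxE KZr.
Qed.

Lemma ac3 (a1 a2 b1 b2 c1 c2 : vec) : a1 + a2 - (b1 + b2) - (c1 + c2) = (a1 - b1 - c1) + (a2 - b2 - c2).
Proof. apply/matrixP => i j; rewrite !mxE; ring. Qed.
Lemma sc3 (k : R) (a1 b1 c1 : vec) : k *: a1 - k *: b1 - k *: c1 = k *: (a1 - b1 - c1).
Proof. by rewrite !scalerBr. Qed.

Lemma curvDX G (X1 X2 : vec) Y Z : curv B G (X1 + X2) Y Z = curv B G X1 Y Z + curv B G X2 Y Z.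
Proof. by rewrite /curv nablaDl nablaDl nablaDr brDl nablaDl ac3. Qed.
Lemma curvZX G c X Y Z : curv B G (c *: X) Y Z = c *: curv B G X Y Z.
Proof. by rewrite /curv nablaZl nablaZl nablaZr brZl nablaZl sc3. Qed.
Lemma curvDY G X (Y1 Y2 : vec) Z : curv B G X (Y1 + Y2) Z = curv B G X Y1 Z + curv B G X Y2 Z.
Proof. by rewrite /curv nablaDl nablaDr nablaDl brDr nablaDl ac3. Qed.
Lemma curvZY G c X Y Z : curv B G X (c *: Y) Z = c *: curv B G X Y Z.
Proof. by rewrite /curv nablaZl nablaZr nablaZl brZr nablaZl sc3. Qed.
Lemma curvDZ G X Y (Z1 Z2 : vec) : curv B G X Y (Z1 + Z2) = curv B G X Y Z1 + curv B G X Y Z2.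
Proof. by rewrite /curv !nablaDr ac3. Qed.
Lemma curvZZ G c X Y Z : curv B G X Y (c *: Z) = c *: curv B G X Y Z.
Proof. by rewrite /curv !nablaZr sc3. Qed.
End S3.

Section S4.
Variable R : realType.
Variable a : R.
Notation vec := 'cV[R]_3.
Notation B := (br_r3a a).
Notation e := (ebasis R).
Ltac ord3 i := let H := fresh in case: i => [[|[|[|?]]] H] //.
Implicit Types (G f U : 'M[R]_3) (x y z X Y Z : vec) (c : R).

Lemma v3_sum (x y z : R) : v3 x y z = x *: e 0 + y *: e 1 + z *: e 2.
Proof. rewrite eE0 eE1 eE2 !v3Z !v3D; apply: v3_eq; ring. Qed.

Lemma colE3 U i : col i U = U 0 i *: e 0 + U 1 i *: e 1 + U 2 i *: e 2.
Proof. by rewrite -v3_sum {1}(v3E (col i U)) !mxE. Qed.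

Lemma bilin (C : vec -> vec -> vec)
  (CDl : forall x y z, C (x + y) z = C x z + C y z)
  (CZl : forall c x z, C (c *: x) z = c *: C x z)
  (CDr : forall x y z, C z (x + y) = C z x + C z y)
  (CZr : forall c x z, C z (c *: x) = c *: C z x) U :
  \sum_(i<3) C (col i U) (col i U) = \sum_(j<3) \sum_(k<3) (U *m U^T) j k *: C (e j) (e k).
Proof.
rewrite sum33 sum3 !colE3 !CDl !CZl !CDr !CZr !mulmx3 !mxE.
move: (C (e 0) (e 0)) (C (e 0) (e 1)) (C (e 0) (e 2)) (C (e 1) (e 0)) (C (e 1) (e 1))
  (C (e 1) (e 2)) (C (e 2) (e 0)) (C (e 2) (e 1)) (C (e 2) (e 2)) => c00 c01 c02 c10 c11 c12 c20 c21 c22.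
apply/matrixP => i j; rewrite !mxE; ring.
Qed.

Lemma UUt G U : orthonormal_basis G U -> U *m U^T = invmx G.
Proof.
rewrite /orthonormal_basis => h.
have [_ uU] := mulmx1_unit h.
have uUt : U^T \in unitmx by rewrite unitmx_tr.
have hGU : G *m U = invmx U^T.
  by rewrite -[G *m U](mulKmx uUt) (mulmxA U^T G U) h mulmx1.
symmetry; apply: invmx_eq.
by rewrite mulmxA hGU mulVmx.
Qed.

Lemma ricci_Ric G U X : orthonormal_basis G U -> ricci_wrt B G U X = Ric a G X.
Proof.
move=> h; rewrite /ricci_wrt (bilin (C := curv B G X)) ?(UUt h) //.
- by move=> *; rewrite curvDY.
- by move=> *; rewrite curvZY.
- by move=> *; rewrite curvDZ.
- by move=> *; rewrite curvZZ.
Qed.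

Lemma ipF f G x y : ip (f^T *m G *m f) x y = ip G (f *m x) (f *m y).
Proof. by rewrite /ip trmx_mul !mulmxA. Qed.

Lemma KF f G X Y Z : automorphism B f -> K a (f^T *m G *m f) X Y Z = K a G (f *m X) (f *m Y) (f *m Z).
Proof. by case=> _ hf; rewrite /K !ipF !hf. Qed.

Lemma Klin3 G X Y Z : K a G X Y Z = Z 0 0 * K a G X Y (e 0) + Z 1 0 * K a G X Y (e 1) + Z 2 0 * K a G X Y (e 2).
Proof. by rewrite {1}(v3E Z) v3_sum !KDz !KZz. Qed.

Lemma nabla_aut f G X Y : automorphism B f -> G \in unitmx ->
  nabla B (f^T *m G *m f) X Y = invmx f *m nabla B G (f *m X) (f *m Y).
Proof.
move=> hf uG; have uf : f \in unitmx by case: hf.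
have ufT : f^T \in unitmx by rewrite unitmx_tr.
rewrite !nablaK.
have -> : \col_(k < 3) K a (f^T *m G *m f) X Y (e k) = f^T *m \col_(k < 3) K a G (f *m X) (f *m Y) (e k).
  apply/matrixP => k j; rewrite (ord1 j) mxE (KF _ _ _ _ hf) Klin3 /ebasis -!colE mulmx3 !mxE; ring.
have -> : invmx (f^T *m G *m f) = invmx f *m invmx G *m invmx f^T.
  apply: invmx_eq; rewrite !mulmxA (mulmxK uf) (mulmxK uG) mulmxV //.
by rewrite -!mulmxA (mulKmx ufT).
Qed.

Lemma curv_aut f G X Y Z : automorphism B f -> G \in unitmx ->
  curv B (f^T *m G *m f) X Y Z = invmx f *m curv B G (f *m X) (f *m Y) (f *m Z).
Proof.
move=> hf uG; have uf : f \in unitmx by case: hf.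
rewrite /curv !nabla_aut // !(mulKVmx uf).
by case: hf => _ ->; rewrite !mulmxBr.
Qed.

Lemma ricci_aut f G U X : automorphism B f -> G \in unitmx ->
  ricci_wrt B (f^T *m G *m f) U X = invmx f *m ricci_wrt B G (f *m U) (f *m X).
Proof.
move=> hf uG; rewrite /ricci_wrt mulmx_sumr; apply: eq_bigr => i _.
by rewrite curv_aut // !colE mulmxA.
Qed.

Lemma KZG k G X Y Z : K a (k *: G) X Y Z = k * K a G X Y Z.
Proof. rewrite /K !ip_expand !mxE; ring. Qed.

Lemma nabla_scale k G X Y : k != 0 -> G \in unitmx -> nabla B (k *: G) X Y = nabla B G X Y.
Proof.
move=> hk uG; rewrite !nablaK invmxZ ?unitmxZ ?unitfE //.
have -> : \col_(i < 3) K a (k *: G) X Y (e i) = k *: \col_(i < 3) K a G X Y (e i).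
  by apply/matrixP => i j; rewrite !mxE KZG.
by rewrite -scalemxAl -scalemxAr scalerA mulVf // scale1r.
Qed.

Lemma curv_scale k G X Y Z : k != 0 -> G \in unitmx -> curv B (k *: G) X Y Z = curv B G X Y Z.
Proof. by move=> hk uG; rewrite /curv !nabla_scale. Qed.

Lemma ricci_scale k G U X : k != 0 -> G \in unitmx -> ricci_wrt B (k *: G) U X = ricci_wrt B G U X.
Proof. by move=> hk uG; rewrite /ricci_wrt; apply: eq_bigr => i _; rewrite curv_scale. Qed.

Lemma Ric_scale k G X : k != 0 -> G \in unitmx -> Ric a (k *: G) X = k^-1 *: Ric a G X.
Proof.
move=> hk uG; rewrite /Ric invmxZ ?unitmxZ ?unitfE // scaler_sumr; apply: eq_bigr => j _.
rewrite scaler_sumr; apply: eq_bigr => l _.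
by rewrite curv_scale // mxE scalerA.
Qed.

Lemma RicD G (X1 X2 : vec) : Ric a G (X1 + X2) = Ric a G X1 + Ric a G X2.
Proof.
rewrite /Ric -big_split; apply: eq_bigr => j _; rewrite -big_split; apply: eq_bigr => l _.
by rewrite curvDX scalerDr.
Qed.
Lemma RicZ G c X : Ric a G (c *: X) = c *: Ric a G X.
Proof.
rewrite /Ric scaler_sumr; apply: eq_bigr => j _; rewrite scaler_sumr; apply: eq_bigr => l _.
by rewrite curvZX !scalerA mulrC.
Qed.

Lemma G1_one : G1 1 1 0 = 1%:M :> 'M[R]_3.
Proof. apply/matrixP => i j; rewrite !mxE; by ord3 i; ord3 j. Qed.

Lemma Ric_one X : Ric a 1%:M X = (- (2 * a ^+ 2)) *: X.
Proof.
have hd : 1 * 1 - 0 ^+ 2 != 0 :> R by rewrite mulr1 expr0n subr0 oner_eq0.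
have hdi : dinv 1 1 0 = 1 :> R by rewrite /dinv mulr1 expr0n subr0 invr1.
have -> : X = X 0 0 *: v3 1 0 0 + X 1 0 *: v3 0 1 0 + X 2 0 *: v3 0 0 1.
  by rewrite {1}(v3E X) !v3Z !v3D; apply: v3_eq; ring.
rewrite -G1_one !RicD !RicZ (@RicE0 _ a _ _ _ hd) (@RicE1 _ a _ _ _ hd) (@RicE2 _ a _ _ _ hd) hdi.
rewrite !v3Z !v3D !v3Z; apply: v3_eq; field; done.
Qed.
End S4.

Section S5.
Variable R : realType.
Variable a : R.
Notation vec := 'cV[R]_3.
Notation B := (br_r3a a).
Notation e := (ebasis R).
Ltac ord3 i := let H := fresh in case: i => [[|[|[|?]]] H] //.
Implicit Types (G f U M : 'M[R]_3) (x y z X Y Z : vec) (c : R).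

Lemma mk3E M : M = mk3 (M 0 0) (M 0 1) (M 0 2) (M 1 0) (M 1 1) (M 1 2) (M 2 0) (M 2 1) (M 2 2).
Proof. apply/matrixP => i j; rewrite mxE; ord3 i; ord3 j; by congr (M _ _); apply/val_inj. Qed.
Lemma mk3_eq (a00 a01 a02 a10 a11 a12 a20 a21 a22 b00 b01 b02 b10 b11 b12 b20 b21 b22 : R) :
  a00 = b00 -> a01 = b01 -> a02 = b02 -> a10 = b10 -> a11 = b11 -> a12 = b12 -> a20 = b20 -> a21 = b21 -> a22 = b22 ->
  mk3 a00 a01 a02 a10 a11 a12 a20 a21 a22 = mk3 b00 b01 b02 b10 b11 b12 b20 b21 b22.
Proof. by move=> -> -> -> -> -> -> -> -> ->. Qed.
Lemma mk3_mul (a00 a01 a02 a10 a11 a12 a20 a21 a22 b00 b01 b02 b10 b11 b12 b20 b21 b22 : R) :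
  mk3 a00 a01 a02 a10 a11 a12 a20 a21 a22 *m mk3 b00 b01 b02 b10 b11 b12 b20 b21 b22 =
  mk3 (a00*b00 + a01*b10 + a02*b20) (a00*b01 + a01*b11 + a02*b21) (a00*b02 + a01*b12 + a02*b22)
      (a10*b00 + a11*b10 + a12*b20) (a10*b01 + a11*b11 + a12*b21) (a10*b02 + a11*b12 + a12*b22)
      (a20*b00 + a21*b10 + a22*b20) (a20*b01 + a21*b11 + a22*b21) (a20*b02 + a21*b12 + a22*b22).
Proof. apply/matrixP => i j; rewrite mulmx3 !mxE; by ord3 i; ord3 j. Qed.
Lemma mk3_tr (a00 a01 a02 a10 a11 a12 a20 a21 a22 : R) :
  (mk3 a00 a01 a02 a10 a11 a12 a20 a21 a22)^T = mk3 a00 a10 a20 a01 a11 a21 a02 a12 a22.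
Proof. apply/matrixP => i j; rewrite !mxE; by ord3 i; ord3 j. Qed.
Lemma mk3_mulv (a00 a01 a02 a10 a11 a12 a20 a21 a22 x y z : R) :
  mk3 a00 a01 a02 a10 a11 a12 a20 a21 a22 *m v3 x y z =
  v3 (a00*x + a01*y + a02*z) (a10*x + a11*y + a12*z) (a20*x + a21*y + a22*z).
Proof. apply/matrixP => i j; rewrite (ord1 j) mulmx3 !mxE; by ord3 i. Qed.
Lemma mk3_one : 1%:M = mk3 1 0 0 0 1 0 0 0 1 :> 'M[R]_3.
Proof. apply/matrixP => i j; rewrite !mxE; by ord3 i; ord3 j. Qed.
Lemma mk3_scale k (a00 a01 a02 a10 a11 a12 a20 a21 a22 : R) :
  k *: mk3 a00 a01 a02 a10 a11 a12 a20 a21 a22 = mk3 (k*a00) (k*a01) (k*a02) (k*a10) (k*a11) (k*a12) (k*a20) (k*a21) (k*a22).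
Proof. apply/matrixP => i j; rewrite !mxE; by ord3 i; ord3 j. Qed.

Lemma br0l y : B 0 y = 0.
Proof. by have := brZl a 0 0 y; rewrite !scale0r. Qed.
Lemma br0r y : B y 0 = 0.
Proof. by have := brZr a 0 0 y; rewrite !scale0r. Qed.
Lemma der0 : derivation B 0.
Proof. by move=> x y; rewrite !mul0mx br0l br0r addr0. Qed.

Lemma der_entries M : derivation B M -> M 1 1 = M 2 2 /\ M 2 1 = - M 1 2.
Proof.
move=> hM.
have E1 := hM (v3 1 0 0) (v3 0 1 0); have E2 := hM (v3 1 0 0) (v3 0 0 1).
rewrite (mk3E M) in E1 E2.
rewrite ?brE ?v3_0 ?v3_1 ?v3_2 ?mk3_mulv ?v3_0 ?v3_1 ?v3_2 ?v3D in E1 E2.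
move: (congr1 (fun v : vec => v 1 0) E1) (congr1 (fun v : vec => v 2 0) E1).
move: (congr1 (fun v : vec => v 1 0) E2) (congr1 (fun v : vec => v 2 0) E2).
rewrite !v3_1 !v3_2 => h1 h2 h3 h4.
have h00 : M 0 0 = 0 by nra.
rewrite h00 in h1 h2 h3 h4.
split; nra.
Qed.

Lemma der_scale k M : derivation B M -> derivation B (k *: M).
Proof.
move=> hM x y; rewrite -!scalemxAl hM scalerDr brZl brZr //.
Qed.

Lemma aut_inv f : automorphism B f -> forall x y, invmx f *m B x y = B (invmx f *m x) (invmx f *m y).
Proof.
case=> uf hf x y.
by rewrite -{1}(mulKVmx uf x) -{1}(mulKVmx uf y) -hf mulKmx.
Qed.

Lemma der_conj f M : automorphism B f -> derivation B M -> derivation B (f *m M *m invmx f).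
Proof.
move=> hf hM x y; have uf : f \in unitmx by case: hf.
rewrite -!mulmxA aut_inv // hM mulmxDr.
case: hf => _ hf'.
by rewrite !hf' !(mulKVmx uf).
Qed.

Lemma aut_mul f g : automorphism B f -> automorphism B g -> automorphism B (f *m g).
Proof.
case=> uf hf [ug hg]; split; first by rewrite unitmx_mul uf ug.
by move=> x y; rewrite -mulmxA hg hf !mulmxA.
Qed.

Lemma unit_of_inv M N : M *m N = 1%:M -> M \in unitmx.
Proof. by case/mulmx1_unit. Qed.

Lemma F_aut v1 v2 : automorphism B (mk3 1 0 0 v1 1 0 v2 0 1).
Proof.
split.
  apply: (@unit_of_inv _ (mk3 1 0 0 (-v1) 1 0 (-v2) 0 1)).
  rewrite mk3_mul mk3_one; apply: mk3_eq; ring.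
move=> x y; rewrite (v3E x) (v3E y) ?mk3_mulv ?brE ?v3_0 ?v3_1 ?v3_2 ?mk3_mulv.
apply: v3_eq; ring.
Qed.

Lemma S_aut s : s != 0 -> automorphism B (mk3 1 0 0 0 s 0 0 0 s).
Proof.
move=> hs; split.
  apply: (@unit_of_inv _ (mk3 1 0 0 0 s^-1 0 0 0 s^-1)).
  rewrite mk3_mul mk3_one; apply: mk3_eq; field; done.
move=> x y; rewrite (v3E x) (v3E y) ?mk3_mulv ?brE ?v3_0 ?v3_1 ?v3_2 ?mk3_mulv.
apply: v3_eq; ring.
Qed.

Lemma ortho_sq (sg sP sD Rr : R) : sg != 0 -> sP != 0 -> sD != 0 ->
  let U := mk3 sg^-1 0 0 0 sP^-1 (- (Rr / (sP * sD))) 0 0 (sP / sD) in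
  U^T *m mk3 (sg^+2) 0 0 0 (sP^+2) Rr 0 Rr ((sD^+2 + Rr^+2) / sP^+2) *m U = 1%:M.
Proof.
move=> hg hP hD /=; rewrite mk3_tr !mk3_mul mk3_one; apply: mk3_eq; field; by rewrite ?hg ?hP ?hD.
Qed.

Lemma ortho_exists (g P Q Rr : R) : 0 < g -> 0 < P -> 0 < P * Q - Rr^+2 ->
  exists U, orthonormal_basis (mk3 g 0 0 0 P Rr 0 Rr Q) U.
Proof.
move=> hg hP hD.
set sg := Num.sqrt g; set sP := Num.sqrt P; set sD := Num.sqrt (P * Q - Rr^+2).
have sgE : sg^+2 = g by rewrite sqr_sqrtr // ltW.
have sPE : sP^+2 = P by rewrite sqr_sqrtr // ltW.
have sDE : sD^+2 = P * Q - Rr^+2 by rewrite sqr_sqrtr // ltW.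
have sg0 : sg != 0 by rewrite gt_eqF // sqrtr_gt0.
have sP0 : sP != 0 by rewrite gt_eqF // sqrtr_gt0.
have sD0 : sD != 0 by rewrite gt_eqF // sqrtr_gt0.
have -> : mk3 g 0 0 0 P Rr 0 Rr Q = mk3 (sg^+2) 0 0 0 (sP^+2) Rr 0 Rr ((sD^+2 + Rr^+2) / sP^+2).
  apply: mk3_eq => //; rewrite sDE sPE; field; by rewrite gt_eqF.
eexists; exact: (ortho_sq Rr sg0 sP0 sD0).
Qed.
End S5.

Section S6.
Variable R : realType.
Variable a : R.
Notation vec := 'cV[R]_3.
Notation B := (br_r3a a).
Notation e := (ebasis R).
Implicit Types (G f U M : 'M[R]_3) (x y z X Y Z : vec) (c : R).

Lemma ip_basis G i j : ip G (e i) (e j) = G i j.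
Proof. by rewrite /ip /ebasis trmx_delta -rowE -colE !mxE. Qed.

Lemma ipS k G x y : ip (k *: G) x y = k * ip G x y.
Proof. rewrite !ip_expand !mxE; ring. Qed.

Lemma v3_neq0 (x y z : R) : (x != 0) || (y != 0) || (z != 0) -> v3 x y z != 0.
Proof.
move=> h; apply/eqP => h0; move: h; rewrite v30 in h0.
have := congr1 (fun v : vec => v 0 0) h0; have := congr1 (fun v : vec => v 1 0) h0.
have := congr1 (fun v : vec => v 2 0) h0.
by rewrite !v3_0 !v3_1 !v3_2 => -> -> ->; rewrite eqxx.
Qed.

Lemma einstein_one : einstein B 1%:M.
Proof.
exists (- (2 * a ^+ 2)) => U hU X.
by rewrite ricci_Ric // Ric_one.
Qed.

Lemma rev_dir G : iso_up_to_scaling B G 1%:M -> solvsoliton B G.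
Proof.
case=> k [f [hk [hf hip]]].
have uf : f \in unitmx by case: hf.
have k0 : k != 0 by rewrite gt_eqF.
have uk1 : (k *: 1%:M : 'M[R]_3) \in unitmx by rewrite unitmxZ ?unitmx1 ?unitfE.
have hG : G = f^T *m (k *: 1%:M) *m f.
  apply/matrixP => i j.
  by rewrite -(ip_basis G) -(ip_basis (f^T *m _ *m f)) hip ipF ipS.
exists (k^-1 * (- (2 * a ^+ 2))), 0; split; first exact: der0.
move=> U hU X.
have hU' : orthonormal_basis (k *: 1%:M) (f *m U).
  by move: hU; rewrite /orthonormal_basis hG trmx_mul !mulmxA.
rewrite mul0mx addr0 hG ricci_aut // (@ricci_Ric _ a _ _ _ hU') Ric_scale ?unitmx1 // Ric_one.
by rewrite scalerA -scalemxAr mulKmx.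
Qed.

Lemma RicN1 (p q r : R) (hd : p*q - r^+2 != 0) :
  (Ric a (G1 p q r) (v3 0 1 0)) 1 0 - (Ric a (G1 p q r) (v3 0 0 1)) 2 0
  = (p^+2 - q^+2 + a * (2 * r * (p + q))) / (p*q - r^+2).
Proof. rewrite (@RicE1 _ a _ _ _ hd) (@RicE2 _ a _ _ _ hd) v3_1 v3_2 /dinv; field; by rewrite ?hd. Qed.

Lemma RicN2 (p q r : R) (hd : p*q - r^+2 != 0) :
  (Ric a (G1 p q r) (v3 0 1 0)) 2 0 + (Ric a (G1 p q r) (v3 0 0 1)) 1 0
  = (2 * r * (p + q) - a * (p^+2 - q^+2)) / (p*q - r^+2).
Proof. rewrite (@RicE1 _ a _ _ _ hd) (@RicE2 _ a _ _ _ hd) v3_1 v3_2 /dinv; field; by rewrite ?hd. Qed.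
End S6.

Section S7.
Variable R : realType.
Variable a : R.
Notation vec := 'cV[R]_3.
Notation B := (br_r3a a).
Notation e := (ebasis R).
Implicit Types (G f U M : 'M[R]_3) (x y z X Y Z : vec) (c : R).

Lemma fwd_dir G : inner_product G -> solvsoliton B G -> iso_up_to_scaling B G 1%:M.
Proof.
case=> hsym hpos [c [D [hD hric]]].
have s10 : G 1 0 = G 0 1 by rewrite -{1}hsym mxE.
have s20 : G 2 0 = G 0 2 by rewrite -{1}hsym mxE.
have s21 : G 2 1 = G 1 2 by rewrite -{1}hsym mxE.
have hP : 0 < G 1 1.
  rewrite -ip_basis; apply: hpos; rewrite eE1; apply: v3_neq0; by rewrite oner_eq0 orbT.
have hQ : 0 < G 2 2.
  rewrite -ip_basis; apply: hpos; rewrite eE2; apply: v3_neq0; by rewrite oner_eq0 orbT.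
have hDpos : 0 < G 1 1 * G 2 2 - G 1 2 ^+ 2.
  have nz : v3 0 (- G 1 2) (G 1 1) != 0 by apply: v3_neq0; rewrite (gt_eqF hP) orbT.
  have h := hpos _ nz.
  have e1 : ip G (v3 0 (- G 1 2) (G 1 1)) (v3 0 (- G 1 2) (G 1 1)) = G 1 1 * (G 1 1 * G 2 2 - G 1 2 ^+ 2).
    rewrite ip_expand !v3_0 !v3_1 !v3_2 s21; ring.
  by move: h; rewrite e1 pmulr_rgt0.
have hd0 : G 1 1 * G 2 2 - G 1 2 ^+ 2 != 0 by rewrite gt_eqF.
pose v1 := (G 2 2 * G 0 1 - G 1 2 * G 0 2) / (G 1 1 * G 2 2 - G 1 2 ^+ 2).
pose v2 := (G 1 1 * G 0 2 - G 1 2 * G 0 1) / (G 1 1 * G 2 2 - G 1 2 ^+ 2).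
pose gam := G 0 0 - (G 0 1 * v1 + G 0 2 * v2).
have hgam : 0 < gam.
  have nz : v3 1 (- v1) (- v2) != 0 by apply: v3_neq0; rewrite oner_eq0.
  have h := hpos _ nz.
  have e1 : ip G (v3 1 (- v1) (- v2)) (v3 1 (- v1) (- v2)) = gam.
    rewrite ip_expand !v3_0 !v3_1 !v3_2 s10 s20 s21 /gam /v1 /v2; field; done.
  by rewrite e1 in h.
have gam0 : gam != 0 by rewrite gt_eqF.
pose F := mk3 1 0 0 v1 1 0 v2 0 1.
pose G2 := mk3 gam 0 0 0 (G 1 1) (G 1 2) 0 (G 1 2) (G 2 2).
have hG : G = F^T *m G2 *m F.
  rewrite {1}(mk3E G) /F /G2 mk3_tr !mk3_mul; apply: mk3_eq; rewrite ?s10 ?s20 ?s21 /gam /v1 /v2; field; done.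
have hFa : automorphism B F := F_aut a v1 v2.
have uF : F \in unitmx by case: hFa.
have uFT : F^T \in unitmx by rewrite unitmx_tr.
have [U1 hU1] := ortho_exists hgam hP hDpos.
have uG2 : G2 \in unitmx.
  have [u1 _] := mulmx1_unit hU1; by move: u1; rewrite unitmx_mul => /andP [].
pose U := invmx F *m U1.
have hU : orthonormal_basis G U.
  rewrite /orthonormal_basis hG /U trmx_mul trmx_inv !mulmxA (mulmxKV uFT) (mulmxK uF).
  exact: hU1.
have hric2 : forall Y, Ric a G2 Y = c *: Y + (F *m D *m invmx F) *m Y.
  move=> Y; have h := hric U hU (invmx F *m Y).
  rewrite hG (ricci_aut U (invmx F *m Y) hFa uG2) /U !(mulKVmx uF) (@ricci_Ric _ a _ _ _ hU1) in h.
  have := congr1 (mulmx F) h.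
  by rewrite (mulKVmx uF) mulmxDr -scalemxAr (mulKVmx uF) !mulmxA.
pose p := G 1 1 / gam; pose q := G 2 2 / gam; pose r := G 1 2 / gam.
have hG2 : G2 = gam *: G1 p q r.
  rewrite /G2 /G1 mk3_scale; apply: mk3_eq; rewrite /p /q /r; field; done.
have hd1 : p * q - r ^+ 2 != 0.
  have -> : p * q - r ^+ 2 = (G 1 1 * G 2 2 - G 1 2 ^+ 2) / gam ^+ 2 by rewrite /p /q /r; field; done.
  by rewrite mulf_neq0 // invr_eq0 expf_neq0.
have uG1 : G1 p q r \in unitmx by move: uG2; rewrite hG2 unitmxZ // unitfE.
pose D' := gam *: (F *m D *m invmx F).
have hric1 : forall Y, Ric a (G1 p q r) Y = (gam * c) *: Y + D' *m Y.
  move=> Y; have := hric2 Y; rewrite hG2 Ric_scale // => h.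
  have := congr1 (fun v => gam *: v) h; rewrite scalerA mulfV // scale1r => ->.
  by rewrite scalerDr scalerA /D' -scalemxAl.
have hD' : derivation B D' by apply: der_scale; apply: der_conj.
have [d11 d21] := der_entries hD'.
clearbody D'.
have h1 := hric1 (v3 0 1 0); have h2 := hric1 (v3 0 0 1).
rewrite [D' in D' *m _](mk3E D') !mk3_mulv !v3Z !v3D in h1.
rewrite [D' in D' *m _](mk3E D') !mk3_mulv !v3Z !v3D in h2.
have e11 := congr1 (fun v : vec => v 1 0) h1; have e21 := congr1 (fun v : vec => v 2 0) h1.
have e12 := congr1 (fun v : vec => v 1 0) h2; have e22 := congr1 (fun v : vec => v 2 0) h2.
rewrite /= !v3_1 !v3_2 in e11 e21 e12 e22.
have z1 : (p^+2 - q^+2 + a * (2 * r * (p + q))) / (p*q - r^+2) = 0.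
  by rewrite -(RicN1 a hd1) e11 e22 d11; ring.
have z2 : (2 * r * (p + q) - a * (p^+2 - q^+2)) / (p*q - r^+2) = 0.
  by rewrite -(RicN2 a hd1) e21 e12 d21; ring.
have x1 : p^+2 - q^+2 + a * (2 * r * (p + q)) = 0.
  by rewrite -[LHS](divfK hd1) z1 mul0r.
have x2 : 2 * r * (p + q) - a * (p^+2 - q^+2) = 0.
  by rewrite -[LHS](divfK hd1) z2 mul0r.
have ha2 : 0 < 1 + a ^+ 2 := ltr_pwDl ltr01 (sqr_ge0 a).
have xu : p^+2 - q^+2 = 0.
  have : (p^+2 - q^+2) * (1 + a ^+ 2) = 0.
    have -> : (p^+2 - q^+2) * (1 + a ^+ 2) = (p^+2 - q^+2 + a * (2 * r * (p + q))) - a * (2 * r * (p + q) - a * (p^+2 - q^+2)) by ring.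
    by rewrite x1 x2 mulr0 subr0.
  by move/eqP; rewrite mulf_eq0 (gt_eqF ha2) orbF => /eqP.
have xw : 2 * r * (p + q) = 0 by move: x2; rewrite xu mulr0 subr0.
have hp : 0 < p by rewrite divr_gt0.
have hq : 0 < q by rewrite divr_gt0.
have hpq : p = q.
  have : (p - q) * (p + q) = 0 by rewrite -xu; ring.
  move/eqP; rewrite mulf_eq0 (gt_eqF (addr_gt0 hp hq)) orbF subr_eq0 => /eqP //.
have hr : r = 0.
  have h2pq : 2 * (p + q) != 0 by rewrite mulf_neq0 ?pnatr_eq0 // gt_eqF // addr_gt0.
  rewrite -(mulfK h2pq r); have -> : r * (2 * (p + q)) = 2 * r * (p + q) by ring.
  by rewrite xw mul0r.
have QP : G 2 2 = G 1 1.
  by have := congr1 (fun t => t * gam) hpq; rewrite /p /q !divfK.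
have R0 : G 1 2 = 0.
  by have := congr1 (fun t => t * gam) hr; rewrite /r divfK // mul0r.
have hPg : 0 < G 1 1 / gam by rewrite divr_gt0.
pose s := Num.sqrt (G 1 1 / gam).
have hs2 : s ^+ 2 = G 1 1 / gam by rewrite sqr_sqrtr // ltW.
have hs0 : s != 0 by rewrite gt_eqF // sqrtr_gt0.
pose S := mk3 1 0 0 0 s 0 0 0 s.
exists gam, (S *m F); split => //; split; first by apply: aut_mul => //; exact: S_aut.
move=> x y.
have hP' : G 1 1 = gam * s ^+ 2 by rewrite hs2 mulrC divfK.
have hG2S : G2 = gam *: (S^T *m 1%:M *m S).
  rewrite /G2 /S mk3_one mk3_tr !mk3_mul mk3_scale; apply: mk3_eq; rewrite ?QP ?R0 ?hP'; ring.
by rewrite hG ipF -!mulmxA -(ipF S 1%:M) -ipS -hG2S.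
Qed.
End S7.


Unset Implicit Arguments.
Theorem proposition4p11 (R : realType) (a : R) (ha : 0 <= a) :
  (forall G : 'M[R]_3, inner_product G ->
     (solvsoliton (br_r3a a) G <-> iso_up_to_scaling (br_r3a a) G 1%:M))
  /\ einstein (br_r3a a) 1%:M.
Proof.
split; last exact: einstein_one.
move=> G hG; split; [exact: fwd_dir | exact: rev_dir].
Qed.
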